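(* If $n\ge 3t+1$, then in every execution of COOL there is a value $\boldsymbol M\ne\phi$ such that, at the end of Phase 3, the updated message $\boldsymbol w^{(i)}$ of every honest processor $i$ belongs to $\{\boldsymbol M,\phi\}$; that is, at most one group of honest processors holds a common non-empty updated message, and all other honest processors hold the empty updated message $\phi$.
   Context: Setting. $n$ processors indexed by $[1:n]$, pairwise joined by reliable private synchronous channels; recipients know senders. At most $t$ processors are dishonest, controlled by a Byzantine adversary of unbounded computational power knowing all inputs, who may make them deviate arbitrarily (missing values are replaced by a fixed default); the others are honest. Processor $i$ holds an $\ell$-bit initial message $\boldsymbol w_i$. $\phi$ is a default value different from every $\ell$-bit message. Logarithms are base 2. Code. $k=\lfloor t/5\rfloor+1$, $c=\lceil \max\{\ell,(t/5+1)\log(n+1)\}/k\rceil$. Messages are zero-padded to $kc$ bits and viewed in $GF(2^c)^k$. Integers in $[1:n]$ are identified with distinct nonzero elements of $GF(2^c)$; $\boldsymbol h_i\in GF(2^c)^k$ has entries $h_{i,j}=\prod_{p\in[1:k],\,p\ne j}\frac{i-p}{j-p}$ (field arithmetic). COOL (honest processor $i$). Initialization: updated message $\boldsymbol w^{(i)}:=\boldsymbol w_i$, $y^{(i)}_j:=\boldsymbol h_j^{\mathsf T}\boldsymbol w_i$ for $j\in[1:n]$, $u_i(i):=1$. Phase 1. (a) Send $(y^{(i)}_j,y^{(i)}_i)$ to each $j\ne i$. (b) For $j\ne i$, link indicator $u_i(j):=1$ if the pair received from $j$ equals $(y^{(i)}_i,y^{(i)}_j)$, else $0$. Success indicator $s_i:=1$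 if $\sum_{j=1}^n u_i(j)\ge n-t$; otherwise $s_i:=0$ and $\boldsymbol w^{(i)}:=\phi$. (c) Send $s_i$ to all; each processor records the indicator received from each $j$ (own for itself) and forms $\mathcal S_1=\{j:s_j=1\}$, $\mathcal S_0=\{j:s_j=0\}$ (views may differ). Phase 2. If $s_i=1$: set $u_i(j):=0$ for all $j\in\mathcal S_0$; if now $\sum_j u_i(j)<n-t$, set $s_i:=0$, $\boldsymbol w^{(i)}:=\phi$, and send $s_i=0$ to all. Everyone overwrites recorded indicators with newly received ones and recomputes $\mathcal S_0,\mathcal S_1$. Phase 3. Repeat Phase 2 once more. Vote $v_i:=1$ if the recorded indicators satisfy $\sum_j s_j\ge 2t+1$, else $0$. Run on the votes a deterministic error-free binary Byzantine agreement protocol for $t<n/3$. If the decision is $0$: set $\boldsymbol w^{(i)}:=\phi$, output $\phi$, stop. Phase 4 (decision 1). If $s_i=0$: replace $y^{(i)}_i$ by the most frequent first component of the Phase-1 pairs received from $j\in\mathcal S_1$; send it to each $j\in\mathcal S_0\setminus\{i\}$; decode from $z_1,\dots,z_n$ ($z_i=y^{(i)}_i$; Phase-4 values for $j\in\mathcal S_0$; second components of Phase-1 pairs for $j\in\mathcal S_1$) a message $\boldsymbol x$ with $\boldsymbol h_j^{\mathsf T}\boldsymbol x=z_j$ for at least $n-t$ indices, and set $\boldsymbol w^{(i)}:=\boldsymbol x$. If $s_i=1$ keep $\boldsymbol w^{(i)}$. Output $\boldsymbol w^{(i)}$. *)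

(* Defs.v *)
From mathcomp Require Import all_boot all_order all_algebra.
Set Implicit Arguments. Unset Strict Implicit. Unset Printing Implicit Defensive.
Import GRing.Theory.
Local Open Scope ring_scope.

Definition cool_k (t : nat) : nat := (t %/ 5 + 1)%N.

(* c = ceil( max{l, (t/5+1) log2(n+1)} / k ) is the least natural c with
   k*c >= l and k*c >= ((t+5)/5) log2(n+1), i.e. (n+1)^(t+5) <= 2^(5kc). *)
Definition cool_c_ok (n t l c : nat) : bool :=
  (l <= cool_k t * c)%N && ((n.+1) ^ (t + 5) <= 2 ^ (5 * cool_k t * c))%N.
Definition is_cool_c (n t l c : nat) : bool :=
  cool_c_ok n t l c && [forall c' : 'I_c, ~~ cool_c_ok n t l c'].

(* h_{i,j} = prod_{p in [1:k], p<>j} (i-p)/(j-p), integers identified with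
   field elements via alpha. i, j are the (1-based) integers. *)
Definition hcoef (F : fieldType) (alpha : nat -> F) (k i j : nat) : F :=
  \prod_(p < k | p.+1 != j) ((alpha i - alpha p.+1) / (alpha j - alpha p.+1)).

Definition hdot (F : fieldType) (alpha : nat -> F) (k : nat) (x : 'I_k -> F)
  (j : nat) : F := \sum_(p < k) hcoef alpha k j p.+1 * x p.

(* zero-padding of an l-bit message to kc bits and splitting into k blocks
   of c bits, each block identified with a field element via ident *)
Definition enc (F : fieldType) (l k c : nat) (ident : {ffun 'I_c -> bool} -> F)
  (w : l.-tuple bool) : 'I_k -> F :=
  fun p => ident [ffun r : 'I_c => nth false w (p * c + r)].

(* ---- One execution of COOL, Phases 1-3.  Processor i : 'I_n is the
   integer i+1.  H = set of honest processors.  Adversary choices: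
   adv1 j i  : pair sent in Phase 1(a) by dishonest j to i,
   advs1 j i : indicator sent in Phase 1(c) by dishonest j to i,
   advs2 j i, advs3 j i : indicator (possibly nothing = None) sent by
               dishonest j to i in Phase 2 resp. Phase 3. *)

Definition yv (F : fieldType) (alpha : nat -> F) (l k c n : nat)
  (ident : {ffun 'I_c -> bool} -> F) (winit : 'I_n -> l.-tuple bool)
  (i j : 'I_n) : F :=
  @hdot F alpha k (@enc F l k c ident (winit i)) j.+1.

Definition u1 (F : fieldType) (n : nat) (H : {set 'I_n})
  (y : 'I_n -> 'I_n -> F) (adv1 : 'I_n -> 'I_n -> F * F) (i j : 'I_n) : bool :=
  let recv := if j \in H then (y j i, y j j) else adv1 j i in
  (j == i) || (recv == (y i i, y i j)).

Definition s_of (n t : nat) (u : 'I_n -> 'I_n -> bool) (i : 'I_n) : bool :=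
  (n - t <= #|[pred j | u i j]|)%N.

Definition view1 (n : nat) (H : {set 'I_n}) (s : 'I_n -> bool)
  (advs1 : 'I_n -> 'I_n -> bool) (i j : 'I_n) : bool :=
  if j == i then s i else if j \in H then s j else advs1 j i.

Definition step_u (n : nat) (u : 'I_n -> 'I_n -> bool)
  (view : 'I_n -> 'I_n -> bool) (i j : 'I_n) : bool :=
  u i j && view i j.

Definition step_s (n t : nat) (u : 'I_n -> 'I_n -> bool) (s : 'I_n -> bool)
  (view : 'I_n -> 'I_n -> bool) (i : 'I_n) : bool :=
  s i && @s_of n t (@step_u n u view) i.

Definition step_view (n t : nat) (H : {set 'I_n}) (u : 'I_n -> 'I_n -> bool)
  (s : 'I_n -> bool) (view : 'I_n -> 'I_n -> bool)
  (adv : 'I_n -> 'I_n -> option bool) (i j : 'I_n) : bool :=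
  let s' := @step_s n t u s view in
  if j == i then s' i
  else if j \in H then (if s j && ~~ s' j then false else view i j)
  else (if adv j i is Some b then b else view i j).

(* updated message of processor i at the end of Phase 3; d = decision of the
   binary Byzantine agreement (common to all honest processors).
   None stands for phi. *)
Definition cool_w3 (F : fieldType) (alpha : nat -> F) (n t l c : nat)
  (ident : {ffun 'I_c -> bool} -> F) (H : {set 'I_n})
  (winit : 'I_n -> l.-tuple bool) (adv1 : 'I_n -> 'I_n -> F * F)
  (advs1 : 'I_n -> 'I_n -> bool) (advs2 advs3 : 'I_n -> 'I_n -> option bool)
  (d : bool) (i : 'I_n) : option (l.-tuple bool) :=
  let y := @yv F alpha l (cool_k t) c n ident winit in
  let u1 := @u1 F n H y adv1 in
  let s1 := @s_of n t u1 in
  let v1 := @view1 n H s1 advs1 in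
  let u2 := @step_u n u1 v1 in
  let s2 := @step_s n t u1 s1 v1 in
  let v2 := @step_view n t H u1 s1 v1 advs2 in
  let s3 := @step_s n t u2 s2 v2 in
  if d && s3 i then Some (winit i) else None.

(* Main.v *)
Require Import Defs.
From mathcomp Require Import all_boot all_order all_algebra.
From mathcomp Require Import zify.
Set Implicit Arguments. Unset Strict Implicit. Unset Printing Implicit Defensive.

Lemma card3 (T : finType) (A B C : {set T}) :
  #|A| + #|B| + #|C| <= #|A :|: B :|: C| + #|A :&: B| + #|A :&: C| + #|B :&: C|.
Proof.
have h1 := cardsU A B. have h2 := cardsU (A :|: B) C.
rewrite setIUl in h2. have h3 := cardsU (A :&: C) (B :&: C).
have h4 : #|A :&: B| <= #|A| by apply/subset_leq_card/subsetIl.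
have h5 : #|A :&: C :|: B :&: C| <= #|C| by apply/subset_leq_card; rewrite -setIUl subsetIr.
have h6 : #|A :&: C :&: (B :&: C)| <= #|A :&: C| by apply/subset_leq_card/subsetIl.
lia.
Qed.

Lemma abstract_main (n t k f : nat) (T V : eqType) (H : {set 'I_n})
  (w : 'I_n -> T) (ev : T -> 'I_n -> V) (u : 'I_n -> 'I_n -> bool)
  (s1 s2 s3 : 'I_n -> bool) :
  (3 * t + 1 <= n) -> f = #|~: H| -> f <= t -> k <= t %/ 5 + 1 ->
  (forall a b, a != b -> #|[set p | ev a p == ev b p]| < k) ->
  (forall i j, i \in H -> j \in H -> j != i -> u i j ->
     ev (w j) i = ev (w i) i /\ ev (w j) j = ev (w i) j) ->
  (forall j, j \in H -> s1 j -> n - t <= #|[set m in H | u j m]| + f) ->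
  (forall j, j \in H -> s2 j -> s1 j /\ n - t <= #|[set m in H | u j m && s1 m]| + f) ->
  (forall j, j \in H -> s3 j -> s2 j /\ n - t <= #|[set m in H | u j m && s2 m]| + f) ->
  forall i i', i \in H -> i' \in H -> s3 i -> s3 i' -> w i = w i'.
Proof.
move=> hn hf hft hk hag hu hs1 hs2 hs3.
have hH : #|H| + f = n by rewrite hf cardsC card_ord.
pose v p := ev (w p) p.
pose Agr a := [set p in H | ev a p == v p].
have Nagr : forall j m, j \in H -> m \in H -> u j m -> ev (w j) m = v m.
  move=> j m hj hm ujm; case: (eqVneq m j) => [->|mj] //.
  by have [_ e] := hu j m hj hm mj ujm; rewrite /v e.
have s1big : forall j, j \in H -> s1 j -> n - t - f <= #|Agr (w j)|.
  move=> j hj sj; have := hs1 j hj sj.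
  have : #|[set m in H | u j m]| <= #|Agr (w j)|.
    apply/subset_leq_card/subsetP => m; rewrite !inE => /andP[hm ujm].
    by rewrite hm /= (Nagr j m hj hm ujm).
  lia.
have inter : forall a b, a != b -> #|Agr a :&: Agr b| < k.
  move=> a b ab; apply: leq_ltn_trans (hag a b ab).
  apply/subset_leq_card/subsetP => p; rewrite !inE => /andP[/andP[_ /eqP e1] /andP[_ /eqP e2]].
  by rewrite e1 e2.
have AgrH : forall a, Agr a \subset H.
  by move=> a; apply/subsetP => p; rewrite inE => /andP[].
have two : forall i i' m, i \in H -> i' \in H -> m \in H -> s1 i -> s1 i' -> s1 m ->
    w i != w i' -> w m = w i \/ w m = w i'.
  move=> i i' m hi hi' hm si si' sm nii.
  case: (eqVneq (w m) (w i)) => [->|mi]; first by left.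
  case: (eqVneq (w m) (w i')) => [->|mi']; first by right.
  exfalso.
  have c1 := s1big i hi si. have c2 := s1big i' hi' si'. have c3 := s1big m hm sm.
  have d1 := inter _ _ nii. have d2 := inter _ _ mi. have d3 := inter _ _ mi'.
  have U : #|Agr (w i) :|: Agr (w i') :|: Agr (w m)| <= #|H|.
    by apply/subset_leq_card; rewrite !subUset !AgrH.
  have := card3 (Agr (w i)) (Agr (w i')) (Agr (w m)).
  rewrite (setIC (Agr (w i)) (Agr (w m))) (setIC (Agr (w i')) (Agr (w m))).
  lia.
have big : forall i b, i \in H -> s3 i -> w i != b ->
    (forall m, m \in H -> s1 m -> w m = w i \/ w m = b) ->
    n - t - f <= #|[set m in H | w m == w i]|.
  move=> i b hi si nib hm.
  have [s2i cX] := hs3 i hi si.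
  pose X := [set m in H | u i m && s2 m].
  pose Z := [set p | ev (w i) p == ev b p].
  have cZ := hag _ _ nib.
  have : ~~ (X \subset Z).
    apply/negP => /subset_leq_card; rewrite /X /Z. move: cX cZ => h1 h2 h3. have h4 := leq_ltn_trans h3 h2. lia.
  case/subsetPn => j; rewrite !inE => /and3P[hj uij s2j] jZ.
  have [s1j cY] := hs2 j hj s2j.
  have wj : w j = w i.
    case: (hm j hj s1j) => // wjb; exfalso; move: jZ; apply/negP/negPn.
    by rewrite (Nagr i j hi hj uij) /v wjb.
  apply: leq_trans (_ : #|[set m in H | u j m && s1 m]| + f - f <= _); first lia.
  rewrite addnK; apply/subset_leq_card/subsetP => m; rewrite !inE.
  case/and3P=> hm' ujm s1m; rewrite hm' /=.
  case: (hm m hm' s1m) => [->//|wmb].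
  have mj : m != j by apply/eqP => e; move: nib; rewrite -wj -wmb e eqxx.
  have [e1 _] := hu j m hj hm' mj ujm.
  exfalso; move: jZ; apply/negP/negPn; by rewrite -wmb e1 wj.
move=> i i' hi hi' si si'; apply/eqP/negPn/negP => nii.
have [s2i _] := hs3 i hi si; have [s1i _] := hs2 i hi s2i.
have [s2i' _] := hs3 i' hi' si'; have [s1i' _] := hs2 i' hi' s2i'.
have b1 := big i (w i') hi si nii (fun m hm sm => two i i' m hi hi' hm s1i s1i' sm nii).
have nii' : w i' != w i by rewrite eq_sym.
have b2 := big i' (w i) hi' si' nii'
   (fun m hm sm => match two i i' m hi hi' hm s1i s1i' sm nii with
                   | or_introl e => or_intror e | or_intror e => or_introl e end).
have D : #|[set m in H | w m == w i] :|: [set m in H | w m == w i']| <= #|H|.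
  by apply/subset_leq_card; rewrite subUset; apply/andP; split; apply/subsetP => m; rewrite inE => /andP[].
have E : [set m in H | w m == w i] :&: [set m in H | w m == w i'] = set0.
  apply/setP => m; rewrite !inE; apply/negP => /andP[/andP[_ /eqP e1] /andP[_ /eqP e2]].
  by move: nii; rewrite -e1 e2 eqxx.
move: D; rewrite cardsU E cards0 subn0. lia.
Qed.

Import GRing.Theory.
Local Open Scope ring_scope.

Definition Lpoly (F : fieldType) (alpha : nat -> F) (k : nat) (p : 'I_k) : {poly F} :=
  (\prod_(q < k | q.+1 != p.+1) (alpha p.+1 - alpha q.+1)^-1) *:
  \prod_(q < k | q.+1 != p.+1) ('X - (alpha q.+1)%:P).

Definition Ppoly (F : fieldType) (alpha : nat -> F) (k : nat) (x : 'I_k -> F) : {poly F} :=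
  \sum_(p < k) x p *: Lpoly alpha p.

Lemma hdotE (F : fieldType) (alpha : nat -> F) (k : nat) (x : 'I_k -> F) j :
  hdot alpha x j = (Ppoly alpha x).[alpha j].
Proof.
rewrite /hdot /Ppoly horner_sum; apply: eq_bigr => p _.
rewrite hornerZ /Lpoly hornerZ horner_prod mulrC /hcoef -big_split /=.
congr (_ * _); apply: eq_bigr => q _; by rewrite hornerXsubC mulrC.
Qed.

Lemma size_Lpoly (F : fieldType) (alpha : nat -> F) (k : nat) (p : 'I_k) :
  (size (Lpoly alpha p) <= k)%N.
Proof.
apply: leq_trans (size_scale_leq _ _) _.
rewrite -big_filter size_prod_XsubC size_filter.
have -> : count (fun q : 'I_k => q.+1 != p.+1) (index_enum 'I_k) = #|predC1 p|.
  rewrite cardE /enum_mem -enumT /= size_filter. rewrite enumT; apply: eq_count => q /=; by rewrite eqSS.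
by rewrite cardC1 card_ord; case: k p => [[]|].
Qed.

Lemma size_Ppoly (F : fieldType) (alpha : nat -> F) (k : nat) (x : 'I_k -> F) :
  (size (Ppoly alpha x) <= k)%N.
Proof.
apply: (big_ind (fun q : {poly F} => size q <= k)%N).
- by rewrite size_poly0.
- move=> a b ha hb; apply: leq_trans (size_polyD _ _) _; by rewrite geq_max ha hb.
- move=> p _; exact: leq_trans (size_scale_leq _ _) (size_Lpoly _ _).
Qed.

Lemma hdot_sys (F : fieldType) (alpha : nat -> F) (k : nat) (x : 'I_k -> F) (q : 'I_k) :
  (forall a b : 'I_k, alpha a.+1 = alpha b.+1 -> a = b) ->
  hdot alpha x q.+1 = x q.
Proof.
move=> inj; rewrite /hdot (bigD1 q) //= big1 ?addr0.
  rewrite /hcoef big1 ?mul1r // => r rq; rewrite divff // subr_eq0.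
  apply/eqP => /inj e; by move: rq; rewrite e eqxx.
move=> p pq; rewrite /hcoef (bigD1 q) /=; last by rewrite eqSS eq_sym.
by rewrite subrr !mul0r.
Qed.

Lemma agree_eq (F : fieldType) (alpha : nat -> F) (n k : nat) (x x' : 'I_k -> F)
  (S : {set 'I_n}) :
  (k <= n)%N -> {in [pred m | (0 < m <= n)%N] &, injective alpha} ->
  (k <= #|S|)%N -> (forall p, p \in S -> hdot alpha x p.+1 = hdot alpha x' p.+1) ->
  forall q, x q = x' q.
Proof.
move=> kn inj kS hS.
have injk : forall a b : 'I_k, alpha a.+1 = alpha b.+1 -> a = b.
  move=> a b e; apply/val_inj/eq_add_S/(inj _ _ _ _ e); rewrite inE /=; exact: leq_trans (ltn_ord _) kn.

have PP : Ppoly alpha x = Ppoly alpha x'.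
  apply/eqP; rewrite -subr_eq0; apply/negPn/negP => nz.
  pose rs := [seq alpha (val p).+1 | p <- enum S].
  have := @max_poly_roots _ _ rs nz.
  have -> : all (root (Ppoly alpha x - Ppoly alpha x')) rs.
    apply/allP => a /mapP [p]; rewrite mem_enum => pS ->.
    by rewrite /root hornerD hornerN -!hdotE hS // subrr.
  have -> : uniq rs.
    rewrite map_inj_in_uniq ?enum_uniq // => a b _ _ e.
    apply/val_inj/eq_add_S/(inj _ _ _ _ e); rewrite inE /=; exact: ltn_ord.
  move=> /(_ isT isT); rewrite size_map -cardE => h.
  have h2 : (size (Ppoly alpha x - Ppoly alpha x')%R <= k)%N.
    apply: leq_trans (size_polyD _ _) _; rewrite size_polyN geq_max !size_Ppoly //.
  have := leq_trans h h2; rewrite ltnNge kS //.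
move=> q; by rewrite -(hdot_sys x q injk) -(hdot_sys x' q injk) !hdotE PP.
Qed.

Lemma enc_inj (F : fieldType) (l k c : nat) (ident : {ffun 'I_c -> bool} -> F)
  (a b : l.-tuple bool) : injective ident -> (l <= k * c)%N ->
  (forall p, @enc F l k c ident a p = @enc F l k c ident b p) -> a = b.
Proof.
move=> ii lkc E; apply/val_inj/(@eq_from_nth _ false); first by rewrite !size_tuple.
move=> idx; rewrite size_tuple => il.
have c0 : (0 < c)%N by case: c ident ii lkc E => //; rewrite muln0; lia.
have qk : (idx %/ c < k)%N by rewrite ltn_divLR //; lia.
have rc : (idx %% c < c)%N by rewrite ltn_pmod.
have := E (Ordinal qk); rewrite /enc => /ii /ffunP /(_ (Ordinal rc)); rewrite !ffunE /=.
by rewrite -divn_eq.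
Qed.

Lemma ev_agree (F : fieldType) (alpha : nat -> F) (n l k c : nat)
  (ident : {ffun 'I_c -> bool} -> F) (a b : l.-tuple bool) :
  injective ident -> (l <= k * c)%N -> (k <= n)%N ->
  {in [pred m | (0 < m <= n)%N] &, injective alpha} -> a != b ->
  (#|[set p : 'I_n | hdot alpha (@enc F l k c ident a) p.+1 == hdot alpha (@enc F l k c ident b) p.+1]| < k)%N.
Proof.
move=> ii lkc kn inj ab; rewrite ltnNge; apply/negP => kS.
move/negP: ab; apply; apply/eqP; apply: (enc_inj ii lkc).
apply: (agree_eq kn inj kS) => p; rewrite inE => /eqP //.
Qed.

Local Close Scope ring_scope.

Lemma card_H (n : nat) (H : {set 'I_n}) (P Q : pred 'I_n) :
  (forall m, m \in H -> P m -> Q m) ->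
  #|[pred m | P m]| <= #|[set m in H | Q m]| + #|~: H|.
Proof.
move=> PQ.
have : #|[pred m | P m]| <= #|[set m in H | Q m] :|: ~: H|.
  apply/subset_leq_card/subsetP => m; rewrite !inE /= => Pm.
  case hm: (m \in H) => //=; by rewrite PQ.
rewrite cardsU; lia.
Qed.

Theorem lemma3 (n t l c : nat) (F : finFieldType) (alpha : nat -> F)
  (ident : {ffun 'I_c -> bool} -> F) (H : {set 'I_n})
  (winit : 'I_n -> l.-tuple bool) (adv1 : 'I_n -> 'I_n -> F * F)
  (advs1 : 'I_n -> 'I_n -> bool) (advs2 advs3 : 'I_n -> 'I_n -> option bool)
  (d : bool) :
  (3 * t + 1 <= n)%N ->
  (#|~: H| <= t)%N ->
  is_cool_c n t l c ->
  #|F| = (2 ^ c)%N ->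
  bijective ident ->
  {in [pred m | (0 < m <= n)%N] &, injective alpha} ->
  (forall m, (0 < m <= n)%N -> alpha m != 0%R) ->
  exists M : l.-tuple bool, forall i, i \in H ->
    cool_w3 alpha t ident H winit adv1 advs1 advs2 advs3 d i = None \/
    cool_w3 alpha t ident H winit adv1 advs1 advs2 advs3 d i = Some M.
Proof.
move=> hn hf hc _ bij inj _.
have ii := bij_inj bij.
have lkc : l <= cool_k t * c by move: hc => /andP[/andP[]].
have kn : cool_k t <= n by rewrite /cool_k; lia.
pose k := cool_k t.
pose ev (a : l.-tuple bool) (p : 'I_n) := hdot alpha (@enc F l k c ident a) p.+1.
pose y := @yv F alpha l k c n ident winit.
pose u := @u1 F n H y adv1.
pose s1 := @s_of n t u.
pose v1 := @view1 n H s1 advs1.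
pose s2 := @step_s n t u s1 v1.
pose v2 := @step_view n t H u s1 v1 advs2.
pose s3 := @step_s n t (@step_u n u v1) s2 v2.
have W : forall i, cool_w3 alpha t ident H winit adv1 advs1 advs2 advs3 d i =
    if d && s3 i then Some (winit i) else None by [].
have key : forall i i', i \in H -> i' \in H -> s3 i -> s3 i' -> winit i = winit i'.
  apply: (@abstract_main n t k #|~: H| _ _ H winit ev u s1 s2 s3) => //.
  - move=> a b ab; exact: ev_agree.
  - move=> i j hi hj ji; rewrite /u /u1 hj (negbTE ji) /= => /eqP [e1 e2]; by split.
  - move=> j hj; rewrite /s1 /s_of => h; apply: leq_trans h _; exact: card_H.
  - move=> j hj; rewrite /s2 /step_s => /andP[s1j h]; split => //.
    apply: leq_trans h _; apply: card_H => m hm; rewrite /step_u /v1 /view1.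
    case: eqP => [->|_]; first by [].
    by rewrite hm.
  - move=> j hj; rewrite /s3 /step_s => /andP[s2j h]; split => //.
    apply: leq_trans h _; apply: card_H => m hm; rewrite /step_u /v2 /v1 /step_view /view1 -/s2.
    case: eqP => [->|_]; first by case/andP => /andP[-> _] ->.
    rewrite hm /=; by case: (s1 m); case: (s2 m); rewrite /= ?andbF ?andbT.
case: (pickP [pred i | (i \in H) && (d && s3 i)]) => [i0 /andP[hi0 /andP[hd s30]]|none].
  exists (winit i0) => i hi; rewrite W; case: ifP => [/andP[_ s3i]|_]; last by left.
  by right; rewrite (key i i0).
exists (nseq_tuple l false) => i hi; left; rewrite W.
by move: (none i); rewrite /= hi /= => ->.
Qed.
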